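(* Let $\tilde c_{g,1}$ be the number of NSG-compositions $x_1+\cdots+x_{m-1}$ of genus $g$ with $x_{m-1}=3$ and all other parts $x_1,\dots,x_{m-2}$ in $\{1,2\}$. Then $$\sum_{g\ge3}\tilde c_{g,1}q^g=\frac{1+q^2}{1-(2q^3+q^4)}\,q^3,$$ and in particular $\sum_g\tilde c_{g,1}\omega^{-g}=\omega^{-1}+\omega^{-3}=0.854101966\ldots$, where $\omega=\frac{1+\sqrt5}2$.
   Context: An NSG-composition is a composition $x_1+\cdots+x_{m-1}$ of positive integers satisfying $x_{s+t}\le x_s+x_t$ and $x_{m-s-t}\le x_{m-s}+x_{m-t}+1$ for all $s,t\ge1$, $s+t<m$ (equivalently, the Kunz vector of a numerical semigroup of multiplicity $m$); its genus is $\sum x_j$. *)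

(* Defs.v *)
From HB Require Import structures.
From mathcomp Require Import all_boot all_order all_algebra.
From mathcomp Require Import all_classical all_reals all_analysis.
Set Implicit Arguments. Unset Strict Implicit. Unset Printing Implicit Defensive.
Import Order.TTheory GRing.Theory Num.Theory.

(* A composition x_1 + ... + x_{m-1} is a sequence x of length m-1;
   x_j (1 <= j <= m-1) is [xat x j] = nth 0 x (j-1). *)
Definition xat (x : seq nat) (j : nat) : nat := nth 0 x j.-1.

Definition is_NSG (x : seq nat) : bool :=
  let m := (size x).+1 in
  all (fun a => 0 < a) x &&
  [forall s : 'I_m, forall t : 'I_m,
     [&& 0 < (s : nat), 0 < (t : nat) & s + t < m] ==>
     (xat x (s + t) <= xat x s + xat x t) &&
     (xat x (m - s - t) <= xat x (m - s) + xat x (m - t) + 1)].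

Definition genus (x : seq nat) : nat := sumn x.

Definition ctilde_shape (x : seq nat) : bool :=
  [&& 0 < size x, xat x (size x) == 3 &
      all (fun a => (a == 1) || (a == 2)) (take (size x).-1 x)].

(* Number of such NSG-compositions of genus g.  A composition of g into
   positive parts has at most g parts, each at most g, so enumerating
   k-tuples (k <= g) of elements of {0..g} is exhaustive. *)
Definition ctilde1 (g : nat) : nat :=
  \sum_(k < g.+1)
     #|[set t : k.-tuple 'I_g.+1 |
         let x := map (@nat_of_ord _) t in
         [&& is_NSG x, genus x == g & ctilde_shape x]]|.

(* Main.v *)
Require Import Defs.
From HB Require Import structures.
From mathcomp Require Import all_boot all_order all_algebra.
From mathcomp Require Import all_classical all_reals all_analysis.
From mathcomp Require Import ring lra zify.
Import Order.TTheory GRing.Theory Num.Theory.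

Fixpoint AL (k B : nat) : seq (seq nat) :=
  if k is k'.+1 then [seq i :: s | i <- iota 0 B, s <- AL k' B] else [:: [::]].

Lemma AL_uniq k B : uniq (AL k B).
Proof.
elim: k => [//|k IH] /=.
apply: allpairs_uniq => //; first exact: iota_uniq.
by move=> [i s] [j t] _ _ /= [-> ->].
Qed.

Lemma mem_AL k B s : (s \in AL k B) = (size s == k) && all (fun i => i < B) s.
Proof.
elim: k s => [|k IH] s /=.
  by case: s.
apply/allpairsP/idP.
  move=> [[i t] /= [Hi Ht ->]] /=.
  rewrite IH in Ht; case/andP: Ht => /eqP -> ->; move: Hi; rewrite mem_iota => /andP[_ ->].
  by rewrite eqxx.
case: s => [//|i t] /= /andP [Hs /andP [Hi Ht]].
exists (i, t) => /=; split => //.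
  by rewrite mem_iota.
by rewrite IH; rewrite eqSS in Hs; rewrite Hs.
Qed.

Lemma card_tup k B (P : pred (seq nat)) :
  #|[set t : k.-tuple 'I_B.+1 | P (map (@nat_of_ord _) t)]| = count P (AL k B.+1).
Proof.
rewrite cardsE cardE /enum_mem size_filter -enumT /=.
transitivity (count P (map (fun t : k.-tuple 'I_B.+1 => map (@nat_of_ord _) (val t)) (enum {: k.-tuple 'I_B.+1}))).
  by rewrite count_map.
have Hp : perm_eq (map (fun t : k.-tuple 'I_B.+1 => map (@nat_of_ord _) (val t)) (enum {: k.-tuple 'I_B.+1})) (AL k B.+1); last by move/permP: Hp.
apply: uniq_perm.
- rewrite map_inj_uniq ?enum_uniq //.
  move=> t1 t2 /= H; apply: val_inj => /=.
  by apply: (inj_map val_inj).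
- exact: AL_uniq.
move=> s; rewrite mem_AL; apply/mapP/idP.
  move=> [t _ ->]; rewrite size_map size_tuple eqxx /=.
  by apply/allP => x /mapP [i _ ->].
move=> /andP [Hs Ha].
have Hs' : size (map (insubd (ord0 : 'I_B.+1)) s) == k by rewrite size_map.
exists (Tuple Hs'); first by rewrite mem_enum.
rewrite /= -map_comp map_id_in // => x xs /=.
by rewrite val_insubd (allP Ha x xs).
Qed.

Definition all12 (y : seq nat) := all (fun a => (a == 1) || (a == 2)) y.
Definition good (y : seq nat) :=
  all (fun i => (nth 0 y i == 2) || (nth 0 y ((size y).-1 - i) == 2)) (iota 0 (size y)).

Lemma goodP y : reflect (forall i, i < size y -> (nth 0 y i == 2) || (nth 0 y ((size y).-1 - i) == 2)) (good y).
Proof.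
apply: (iffP allP) => H i Hi; apply: H.
  by rewrite mem_iota.
by move: Hi; rewrite mem_iota.
Qed.

Lemma all12_nth y i : all12 y -> i < size y -> (nth 0 y i == 1) || (nth 0 y i == 2).
Proof. by move=> /allP H Hi; apply: H; rewrite mem_nth. Qed.

Lemma NSG_rcons y : all12 y -> is_NSG (rcons y 3) = good y.
Proof.
move=> H12.
set n := size y.
have Hsz : size (rcons y 3) = n.+1 by rewrite size_rcons.
have mid : forall i, i < n -> xat (rcons y 3) i.+1 = nth 0 y i.
  by move=> i Hi; rewrite /xat /= nth_rcons Hi.
have top : xat (rcons y 3) n.+1 = 3.
  by rewrite /xat /= nth_rcons ltnn eqxx.
have b12 : forall i, i < n -> (nth 0 y i == 1) || (nth 0 y i == 2).
  by move=> i; apply: all12_nth.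
have lo : forall j, 0 < j <= n.+1 -> 1 <= xat (rcons y 3) j.
  move=> [|j] // /andP [_ Hj]; case: (ltnP j n) => Hjn.
    by rewrite mid //; case/orP: (b12 j Hjn) => /eqP ->.
  have -> : j = n by apply/eqP; rewrite eqn_leq Hjn andbT.
  by rewrite top.
have hi : forall j, 0 < j <= n -> xat (rcons y 3) j <= 2.
  move=> [|j] // /andP [_ Hj].
  by rewrite mid //; case/orP: (b12 j Hj) => /eqP ->.
rewrite /is_NSG Hsz all_rcons /=.
have -> : all (fun a => 0 < a) y.
  by apply/allP => a ay; case/orP: (allP H12 a ay) => /eqP ->.
rewrite /=.
apply/idP/idP.
  move=> /forallP H; apply/goodP => i Hi.
  have /forallP H1 := H (inord i.+1).
  have /implyP H2 := H1 (inord (n - i)).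
  rewrite !inordK in H2; try lia.
  have /andP [H3 _] : _ := H2 ltac:(apply/and3P; split; lia).
  have Ei : i.+1 + (n - i) = n.+1 by lia.
  rewrite Ei top mid // in H3.
  have E2 : n - i = (n.-1 - i).+1 by lia.
  rewrite E2 mid in H3; last by lia.
  move: H3; case/orP: (b12 i Hi) => /eqP ->; case/orP: (b12 (n.-1 - i) ltac:(lia)) => /eqP -> //.
move=> /goodP H; apply/forallP => s; apply/forallP => t; apply/implyP => /and3P [s0 t0 st].
have Hs := ltn_ord s; have Ht := ltn_ord t.
apply/andP; split.
  case: (ltnP (s + t) n.+1) => Hst.
    have := hi (s + t) ltac:(lia); have := lo s ltac:(lia); have := lo t ltac:(lia); lia.
  have Est : s + t = n.+1 by lia.
  rewrite Est top.
  have Es : (s : nat) = (s.-1).+1 by lia.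
  have Et : (t : nat) = (n.-1 - s.-1).+1 by lia.
  rewrite Es Et !mid; try lia.
  have := H s.-1 ltac:(lia).
  move: (b12 s.-1 ltac:(lia)) (b12 (n.-1 - s.-1) ltac:(lia)).
  by case/orP => /eqP ->; case/orP => /eqP ->.
have := hi (n.+2 - s - t) ltac:(lia); have := lo (n.+2 - s) ltac:(lia); have := lo (n.+2 - t) ltac:(lia); lia.
Qed.

Lemma shape_rcons y z : ctilde_shape (rcons y z) = (z == 3) && all12 y.
Proof.
rewrite /ctilde_shape size_rcons /= /xat /= nth_rcons ltnn eqxx.
by rewrite -cats1 take_size_cat.
Qed.

Definition Pg g (x : seq nat) := [&& is_NSG x, genus x == g & ctilde_shape x].

Lemma Pg_nil g : Pg g [::] = false.
Proof. by rewrite /Pg /ctilde_shape /= !andbF. Qed.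

Lemma Pg_rcons g y z : Pg g (rcons y z) = [&& z == 3, all12 y, good y & sumn y + 3 == g].
Proof.
rewrite /Pg shape_rcons.
case: (z =P 3) => [->|_]; last by rewrite !andbF.
case H: (all12 y); last by rewrite !andbF.
by rewrite NSG_rcons // /genus sumn_rcons !andbT.
Qed.

Definition wrp (p : nat * nat) (s : seq nat) := p.1 :: rcons s p.2.

Fixpoint M (n : nat) : seq (seq nat) :=
  match n with
  | 0 => [:: [::]]
  | 1 => [:: [:: 1]; [:: 2]]
  | n'.+2 => [seq wrp p s | p <- [:: (1,1); (1,2); (2,1); (2,2)], s <- M n']
  end.

Lemma M_spec n : (uniq (M n) /\ forall s, (s \in M n) = (size s == n) && all12 s)
              /\ (uniq (M n.+1) /\ forall s, (s \in M n.+1) = (size s == n.+1) && all12 s).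
Proof.
elim: n => [|n [[IHu IHm] [IHu1 IHm1]]].
  split; split => //.
    by case => [|a s].
  case => [|a [|b s]] //=; rewrite /all12 /=.
    by rewrite !inE !eqseq_cons !andbT.
  by rewrite !in_cons !eqseq_cons !andbF.
split; first by split.
split.
  apply: allpairs_uniq => //.
  move=> [[a b] s] [[a' b'] s'] _ _ /= [-> /rcons_inj [-> ->]] //.
move=> s; apply/allpairsP/idP.
  move=> [[[a b] t] /= [Hp Ht ->]].
  rewrite /wrp /= size_rcons IHm in Ht *.
  case/andP: Ht => Ht Ha.
  rewrite /all12 /= all_rcons.
  move: Hp; rewrite !inE => Hp.
  rewrite !eqSS Ht /=.
  by case/or4P: Hp => /eqP [-> ->]; rewrite /= -/(all12 t) Ha.
case: s => [//|a s] /=.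
case/lastP: s => [//|s b] /andP [].
rewrite size_rcons !eqSS => Hs.
rewrite /all12 /= all_rcons => /and3P [Ha Hb Hall].
exists ((a, b), s) => /=; split => //.
  by rewrite !inE; case/orP: Ha => /eqP ->; case/orP: Hb => /eqP ->.
by rewrite IHm Hs.
Qed.

Lemma M_uniq n : uniq (M n).
Proof. by case: (M_spec n) => [[]]. Qed.
Lemma mem_M n s : (s \in M n) = (size s == n) && all12 s.
Proof. by case: (M_spec n) => [[_ ->]]. Qed.

Lemma good_wrap a b z : good (wrp (a, b) z) = ((a == 2) || (b == 2)) && good z.
Proof.
move En: (size z) => n.
have nthw : forall i, nth 0 (wrp (a, b) z) i =
   if i == 0 then a else if i <= n then nth 0 z i.-1 else if i == n.+1 then b else 0.
  by move=> [|i] //=; rewrite nth_rcons En eqSS.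
have Hs : size (wrp (a, b) z) = n.+2 by rewrite /= size_rcons En.
apply/goodP/andP; rewrite Hs /=.
  move=> H; split.
    by have := H 0 isT; rewrite !nthw /= subn0 ltnn eqxx.
  apply/goodP => i Hi.
  have := H i.+1 ltac:(lia).
  rewrite !nthw /=.
  have -> : (i < n) = true by lia.
  have -> : (n.+1 - i.+1 == 0) = false by lia.
  have -> : (n.+1 - i.+1 <= n) = true by lia.
  rewrite (_ : (n - i).-1 = n.-1 - i); last by lia.
  by rewrite En.
move=> [Hab /goodP H] [|i] Hi.
  by rewrite !nthw /= subn0 ltnn eqxx.
rewrite !nthw /=.
case: (ltnP i n) => Hin.
  idtac.
  have -> : (n.+1 - i.+1 == 0) = false by lia.
  have -> : (n.+1 - i.+1 <= n) = true by lia.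
  rewrite (_ : (n - i).-1 = n.-1 - i); last by lia.
  by have := H i ltac:(lia); rewrite En.
have -> : i = n by lia.
by rewrite eqxx subnn /= orbC.
Qed.

Definition U n e g := count (fun y => good y && (sumn y + e == g)) (M n).

Lemma sumn_ge y : all12 y -> size y <= sumn y.
Proof.
elim: y => [//|a y IH] /= /andP [Ha Hy].
have := IH Hy; case/orP: Ha => /eqP ->; lia.
Qed.

Lemma U_zero n e g : g < n + e -> U n e g = 0.
Proof.
move=> H; rewrite /U (eq_in_count (a2 := pred0)) ?count_pred0 // => y.
rewrite mem_M => /andP [/eqP Hs H12] /=.
have := sumn_ge _ H12; rewrite Hs => Hge.
rewrite (_ : (sumn y + e == g) = false) ?andbF //; apply/negbTE/eqP; lia.
Qed.

Lemma U0 e g : U 0 e g = (e == g).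
Proof. by rewrite /U /= add0n addn0. Qed.

Lemma U1 e g : U 1 e g = (e + 2 == g).
Proof. by rewrite /U /= add0n !addn0 [2 + e]addnC. Qed.

Lemma U2 n e g : U n.+2 e g = U n (e + 3) g + U n (e + 3) g + U n (e + 4) g.
Proof.
have E : forall a b, count (preim (wrp (a, b)) (fun y => good y && (sumn y + e == g))) (M n)
   = if (a == 2) || (b == 2) then U n (e + (a + b)) g else 0.
  move=> a b; case: ifP => Hab.
    apply: eq_count => y; rewrite /= good_wrap Hab /= sumn_rcons.
    congr (_ && _); apply/eqP/eqP; lia.
  rewrite (eq_count (a2 := pred0)) ?count_pred0 // => y.
  by rewrite /= good_wrap Hab.
rewrite /U /= !count_cat !count_map addn0.
rewrite !E /=.
by rewrite add0n addnA.
Qed.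

Definition V e g N := \sum_(n < N) U n e g.

Lemma V_ext e g N d : g < N + e -> V e g (N + d) = V e g N.
Proof.
move=> H; elim: d => [|d IH]; first by rewrite addn0.
rewrite addnS /V big_ord_recr /= -/(V e g (N + d)) IH U_zero ?addn0 //; lia.
Qed.

Lemma cnt n g : count (Pg g) (AL n.+1 g.+1) = U n 3 g.
Proof.
rewrite /U -!size_filter.
transitivity (size (map (rcons^~ 3) [seq y <- M n | good y && (sumn y + 3 == g)])); last by rewrite size_map.
apply: perm_size; apply: uniq_perm.
- by apply: filter_uniq; apply: AL_uniq.
- rewrite map_inj_uniq; last exact: rcons_injl.
  by apply: filter_uniq; apply: M_uniq.
move=> x; rewrite mem_filter mem_AL.
case/lastP: x => [|y z].
  rewrite Pg_nil /=; symmetry; apply/mapP => [[y _]] /(congr1 size).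
  by rewrite size_rcons.
rewrite Pg_rcons size_rcons all_rcons.
case: (z =P 3) => [->|Hz] /=; last first.
  by symmetry; apply/mapP => [[y' _]] /rcons_inj [_ /Hz].
rewrite -[rcons y 3]/((rcons^~ 3) y) mem_map; last exact: rcons_injl.
rewrite mem_filter mem_M eqSS.
case H12: (all12 y); case: (good y); case Hs: (sumn y + 3 == g); case: (size y == n); rewrite /= ?andbF //.
have Hg : 3 <= g by move/eqP: Hs; lia.
rewrite ltnS Hg /=; apply/allP => a ay; move/allP: H12 => /(_ a ay) /orP [] /eqP ->; lia.
Qed.

Lemma c_V g : ctilde1 g = V 3 g g.
Proof.
rewrite /ctilde1 (eq_bigr (fun k : 'I_g.+1 => count (Pg g) (AL k g.+1))); last first.
  by move=> k _; apply: card_tup.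
rewrite big_ord_recl /= Pg_nil add0n /V.
by apply: eq_bigr => i _; rewrite cnt.
Qed.

Lemma shiftV d g : V (3 + d) g g = if d <= g then V 3 (g - d) (g - d) else 0.
Proof.
case: leqP => Hd.
  have -> : V 3 (g - d) (g - d) = V (3 + d) g (g - d).
    apply: eq_bigr => i _; apply: eq_count => y.
    congr (_ && _); apply/eqP/eqP; lia.
  rewrite -(V_ext _ _ (g - d) d); last by lia.
  by rewrite subnK.
rewrite /V big1 // => i _; apply: U_zero; lia.
Qed.

Lemma rec g : ctilde1 g = (g == 3) + (g == 5) + 2 * (if 3 <= g then ctilde1 (g - 3) else 0)
                          + (if 4 <= g then ctilde1 (g - 4) else 0).
Proof.
rewrite !c_V -(V_ext 3 g g 2); last by lia.
rewrite addn2 /V big_ord_recl big_ord_recl /=.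
rewrite U0 U1.
under eq_bigr => i _ do rewrite U2.
rewrite !big_split /=.
have E6 := shiftV 3 g; have E7 := shiftV 4 g.
rewrite /V /= in E6 E7.
rewrite E6 E7.
rewrite [_ == 3]eq_sym [_ == 5]eq_sym.
case: ifP => _; case: ifP => _; lia.
Qed.

Local Open Scope classical_set_scope.
Local Open Scope ring_scope.

Section P2.
Variable R : realType.

Fixpoint Ssum (r : R) (n : nat) : R :=
  if n is n'.+1 then Ssum r n' + (ctilde1 n')%:R * r ^+ n' else 0.

Lemma Ssum_ge0 r n : 0 <= r -> 0 <= Ssum r n.
Proof.
move=> r0; elim: n => [//|n IH] /=.
by apply: addr_ge0 => //; apply: mulr_ge0; [apply: ler0n | apply: exprn_ge0].
Qed.

Lemma Ssum_mono r m n : 0 <= r -> (m <= n)%N -> Ssum r m <= Ssum r n.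
Proof.
move=> r0; elim: n => [|n IH]; first by rewrite leqn0 => /eqP ->.
rewrite leq_eqVlt => /orP [/eqP -> //| /IH Hm] /=.
apply: (le_trans Hm); rewrite lerDl.
by apply: mulr_ge0; [apply: ler0n | apply: exprn_ge0].
Qed.

Lemma recR n : (ctilde1 n.+4.+2)%:R = 2 * (ctilde1 n.+3)%:R + (ctilde1 n.+2)%:R :> R.
Proof.
rewrite rec /=.
have -> : (n.+4.+2 - 3)%N = n.+3 by lia.
have -> : (n.+4.+2 - 4)%N = n.+2 by lia.
by rewrite add0n natrD natrM.
Qed.

Lemma Sid r n : Ssum r (n.+4.+2) - 2 * r ^+ 3 * Ssum r n.+3 - r ^+ 4 * Ssum r n.+2 = r ^+ 3 + r ^+ 5.
Proof.
have c0 : ctilde1 0 = 0%N by rewrite rec.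
have c1 : ctilde1 1 = 0%N by rewrite rec.
have c2 : ctilde1 2 = 0%N by rewrite rec.
have c3 : ctilde1 3 = 1%N by rewrite rec /= c0.
have c4 : ctilde1 4 = 0%N by rewrite rec /= c1 c0.
have c5 : ctilde1 5 = 1%N by rewrite rec /= c2 c1.
elim: n => [|n IH].
  rewrite /= c0 c1 c2 c3 c4 c5 /=.
  ring.
rewrite -IH.
have -> : Ssum r n.+4.+3 = Ssum r n.+4.+2 + (ctilde1 n.+4.+2)%:R * r ^+ n.+4.+2 by [].
have -> : Ssum r n.+4 = Ssum r n.+3 + (ctilde1 n.+3)%:R * r ^+ n.+3 by [].
have -> : Ssum r n.+3 = Ssum r n.+2 + (ctilde1 n.+2)%:R * r ^+ n.+2 by [].
rewrite recR !exprS.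
ring.
Qed.
End P2.
Arguments Ssum {R}.
Arguments Ssum_mono {R}.
Arguments Sid {R}.
Arguments Ssum_ge0 {R}.

Module P2M.
Import numFieldNormedType.Exports.
Lemma part2 (R : realType) :
  let omega : R := (1 + Num.sqrt 5) / 2 in
   (fun n : nat => \sum_(0 <= g < n) (ctilde1 g)%:R * omega ^- g) @ \oo
     --> omega^-1 + omega ^- 3.
Proof.
move=> omega.
have s0 : 0 <= Num.sqrt 5 :> R := sqrtr_ge0 _.
have s2 : Num.sqrt 5 * Num.sqrt 5 = 5 :> R.
  by rewrite -expr2 sqr_sqrtr // ler0n.
have om0 : 0 < omega by rewrite /omega; lra.
have om2 : omega * omega = omega + 1 by rewrite /omega; nra.
set r := omega^-1.
have rom : r * omega = 1 by rewrite mulVf // gt_eqF.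
have r0 : 0 < r by rewrite invr_gt0.
have rr : r * r + r = 1.
  have h : r * r * (omega * omega) = 1 by rewrite mulrACA rom mulr1.
  rewrite om2 mulrDr mulr1 -mulrA rom mulr1 in h.
  by rewrite addrC.
have Hu : (fun n : nat => \sum_(0 <= g < n) (ctilde1 g)%:R * omega ^- g) = Ssum r.
  apply/funext => n; elim: n => [|n IH]; first by rewrite big_geq.
  by rewrite big_nat_recr //= IH /r exprVn.
rewrite Hu (_ : omega^-1 + omega ^- 3 = r + r ^+ 3); last by rewrite /r exprVn.
have K0 : 0 < 1 - 2 * r ^+ 3 - r ^+ 4.
  rewrite !exprS expr0; nra.
have mono : nondecreasing_seq (Ssum r).
  by move=> m n mn; apply: Ssum_mono => //; apply: ltW.
have ub : has_ubound (range (Ssum r)).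
  exists ((r ^+ 3 + r ^+ 5) / (1 - 2 * r ^+ 3 - r ^+ 4)) => _ [n _ <-].
  have nn : (n <= n.+4.+2)%N by lia.
  apply: (le_trans (Ssum_mono r _ _ (ltW r0) nn)).
  rewrite ler_pdivlMr //.
  have := Sid r n.
  have := Ssum_mono r n.+3 n.+4.+2 (ltW r0) ltac:(lia).
  have := Ssum_mono r n.+2 n.+4.+2 (ltW r0) ltac:(lia).
  have r3 : 0 <= r ^+ 3 by rewrite exprn_ge0 // ltW.
  have r4 : 0 <= r ^+ 4 by rewrite exprn_ge0 // ltW.
  nra.
set L := sup (range (Ssum r)).
have HL : Ssum r @ \oo --> L by exact: nondecreasing_cvgn.
have h6 : [sequence Ssum r (n + 6)%N]_n @ \oo --> L by rewrite cvg_shiftn.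
have h3 : [sequence Ssum r (n + 3)%N]_n @ \oo --> L by rewrite cvg_shiftn.
have h2 : [sequence Ssum r (n + 2)%N]_n @ \oo --> L by rewrite cvg_shiftn.
have H1 : (fun n => Ssum r (n + 6)%N - 2 * r ^+ 3 * Ssum r (n + 3)%N - r ^+ 4 * Ssum r (n + 2)%N)
   @ \oo --> L - 2 * r ^+ 3 * L - r ^+ 4 * L.
  apply: cvgB; first apply: cvgB.
  - exact: h6.
  - exact: cvgMl_tmp.
  - exact: cvgMl_tmp.
have H2 : (fun n => Ssum r (n + 6)%N - 2 * r ^+ 3 * Ssum r (n + 3)%N - r ^+ 4 * Ssum r (n + 2)%N)
   = fun _ => r ^+ 3 + r ^+ 5.
  by apply/funext => n; rewrite !addnS !addn0 Sid.
rewrite H2 in H1.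
have EL : r ^+ 3 + r ^+ 5 = L - 2 * r ^+ 3 * L - r ^+ 4 * L.
  by apply: (cvg_unique _ (cvg_cst (r ^+ 3 + r ^+ 5)) H1).
have D0 : r * r + r - 1 = 0 by rewrite rr subrr.
have E2 : (r + r ^+ 3) * (1 - 2 * r ^+ 3 - r ^+ 4) = r ^+ 3 + r ^+ 5.
  apply/eqP; rewrite -subr_eq0; apply/eqP.
  transitivity (- r * (r * r + r - 1) * (r ^+ 4 + r ^+ 3 + 2 * r ^+ 2 + r + 1)); first by ring.
  by rewrite D0 mulr0 mul0r.
have E3 : (L - (r + r ^+ 3)) * (1 - 2 * r ^+ 3 - r ^+ 4) = 0.
  rewrite mulrBl E2 EL; ring.
have -> : r + r ^+ 3 = L.
  apply/eqP; rewrite eq_sym -subr_eq0; move/eqP: E3; rewrite mulf_eq0 => /orP [//|/eqP K1].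
  by move: K0; rewrite K1 ltxx.
exact: HL.
Qed.
End P2M.

Theorem proposition16p2 (R : realType) :
  (forall g : nat,
     (ctilde1 g)%:Z
     - 2 * (if (3 <= g)%N then (ctilde1 (g - 3))%:Z else 0)
     - (if (4 <= g)%N then (ctilde1 (g - 4))%:Z else 0)
     = (g == 3)%N%:Z + (g == 5)%N%:Z) /\
  (let omega : R := (1 + Num.sqrt 5) / 2 in
   (fun n : nat => \sum_(0 <= g < n) (ctilde1 g)%:R * omega ^- g) @ \oo
     --> omega^-1 + omega ^- 3).
Proof.
split; last exact: P2M.part2.
move=> g; rewrite (rec g).
move: (ctilde1 (g - 3)) (ctilde1 (g - 4)) (nat_of_bool (g == 3)) (nat_of_bool (g == 5)) => a b c d.
case: ifP => _; case: ifP => _; lia.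
Qed.
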